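(* Let $\mathscr{C}$ be a 2-complex containing no 3-book, and let $k$ be the number of singular nodes of $\mathscr{C}$. Let $G$ be a graph and let $G'$ be the graph obtained from $G$ by subdividing each edge exactly $k$ times. Then $G$ has an embedding into $\mathscr{C}$ if and only if $G'$ has an embedding $\Gamma'$ into $\mathscr{C}$ such that every singular node of $\mathscr{C}$ lying in the image of $\Gamma'$ is the image under $\Gamma'$ of a vertex of $G'$.
   Context: A 2-complex is an abstract simplicial complex of dimension at most two (nodes, segments, triangles), identified with its geometric realization. A 2-complex contains a 3-book if some three distinct triangles share a common segment. Let $p$ be a node. A cone at $p$ is a cyclic sequence of triangles $t_1,\dots,t_k,t_{k+1}=t_1$ all incident to $p$ such that for each $i$, $t_i$ and $t_{i+1}$ share a segment incident with $p$, and any other pair of these triangles has only $p$ in common. A corner at $p$ is an inclusionwise maximal (non-cyclic) sequence of triangles $t_1,\dots,t_k$ all incident to $p$ such that for $i=1,\dots,k-1$, $t_i$ and $t_{i+1}$ share a segment incident with $p$, and any other pair has only $p$ in common. An isolated segment at $p$ is a segment incident to $p$ but to no triangle. If $\mathscr{C}$ has no 3-book, the segments and triangles incident with $p$ are uniquely partitioned into cones, corners and isolated segments; $p$ is regular if all of them form a single cone or a single corner, and singular otherwise. Graphs are finite, may have loops and multiple edges; embeddings are injective continuous maps. *)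

(* Defs.v *)
From Stdlib Require Import Reals List Arith Lia.
Import ListNotations.
Open Scope R_scope.

(** * Finite 2-complexes (abstract simplicial complexes of dim <= 2). *)
Record complex2 := Complex2 {
  nnodes : nat;
  seg : nat -> nat -> Prop;
  tri : nat -> nat -> nat -> Prop }.

Definition is_2complex (C : complex2) : Prop :=
  (forall a b, seg C a b -> (a < nnodes C)%nat /\ (b < nnodes C)%nat) /\
  (forall a, ~ seg C a a) /\
  (forall a b, seg C a b -> seg C b a) /\
  (forall a b c, tri C a b c -> a <> b /\ b <> c /\ a <> c) /\
  (forall a b c, tri C a b c -> tri C b a c) /\
  (forall a b c, tri C a b c -> tri C a c b) /\
  (forall a b c, tri C a b c -> seg C a b).

Definition has_3book (C : complex2) : Prop :=
  exists a b c1 c2 c3, tri C a b c1 /\ tri C a b c2 /\ tri C a b c3 /\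
    c1 <> c2 /\ c1 <> c3 /\ c2 <> c3.

Definition tri3 := (nat * nat * nat)%type.
Definition in3 (y : nat) (t : tri3) : Prop :=
  let '(a, b, c) := t in y = a \/ y = b \/ y = c.
Definition is_tri (C : complex2) (t : tri3) : Prop :=
  let '(a, b, c) := t in tri C a b c.
Definition same3 (t u : tri3) : Prop := forall y, in3 y t <-> in3 y u.
Definition mem3 (t : tri3) (ts : list tri3) : Prop := exists u, In u ts /\ same3 t u.
Definition d3 : tri3 := (0%nat, 0%nat, 0%nat).

Definition shares_seg_at (p : nat) (t u : tri3) : Prop :=
  in3 p t /\ in3 p u /\
  exists x, x <> p /\ in3 x t /\ in3 x u /\
    forall y, in3 y t -> in3 y u -> y = p \/ y = x.

Definition only_p (p : nat) (t u : tri3) : Prop :=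
  forall y, in3 y t -> in3 y u -> y = p.

Definition cone_at (C : complex2) (p : nat) (ts : list tri3) : Prop :=
  let k := length ts in
  (3 <= k)%nat /\
  (forall t, In t ts -> is_tri C t /\ in3 p t) /\
  (forall i, (i < k)%nat ->
     shares_seg_at p (nth i ts d3) (nth ((i + 1) mod k) ts d3)) /\
  (forall i j, (i < k)%nat -> (j < k)%nat -> i <> j ->
     j <> ((i + 1) mod k)%nat -> i <> ((j + 1) mod k)%nat ->
     only_p p (nth i ts d3) (nth j ts d3)).

Definition corner_seq (C : complex2) (p : nat) (ts : list tri3) : Prop :=
  let k := length ts in
  (1 <= k)%nat /\
  (forall t, In t ts -> is_tri C t /\ in3 p t) /\
  (forall i, (i + 1 < k)%nat -> shares_seg_at p (nth i ts d3) (nth (i + 1) ts d3)) /\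
  (forall i j, (j < k)%nat -> (i + 1 < j)%nat ->
     only_p p (nth i ts d3) (nth j ts d3)).

Definition corner_at (C : complex2) (p : nat) (ts : list tri3) : Prop :=
  corner_seq C p ts /\
  forall ts', corner_seq C p ts' ->
    (forall t, mem3 t ts -> mem3 t ts') -> (forall t, mem3 t ts' -> mem3 t ts).

(** [p] is regular: the segments and triangles incident with [p] form a
    single cone or a single corner (no isolated segment, and all triangles
    at [p] belong to that one cone/corner). *)
Definition regular (C : complex2) (p : nat) : Prop :=
  (forall q, seg C p q -> exists a b, tri C p a b /\ (q = a \/ q = b)) /\
  exists ts, (cone_at C p ts \/ corner_at C p ts) /\
    (forall a b, tri C p a b -> mem3 (p, a, b) ts).

Definition singular (C : complex2) (p : nat) : Prop :=
  (p < nnodes C)%nat /\ ~ regular C p.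

Definition num_singular (C : complex2) (k : nat) : Prop :=
  exists l, NoDup l /\ (forall p, In p l <-> singular C p) /\ length l = k.

(** * Geometric realization: barycentric coordinates in R^nnodes. *)
Fixpoint sumR (n : nat) (f : nat -> R) : R :=
  match n with O => 0 | S m => sumR m f + f m end.

Definition point := nat -> R.
Definition eqpt (x y : point) : Prop := forall i, x i = y i.

Definition in_real (C : complex2) (x : point) : Prop :=
  (forall i, (nnodes C <= i)%nat -> x i = 0) /\
  (forall i, 0 <= x i) /\
  sumR (nnodes C) x = 1 /\
  (forall a b, a <> b -> 0 < x a -> 0 < x b -> seg C a b) /\
  (forall a b c, a <> b -> b <> c -> a <> c ->
     0 < x a -> 0 < x b -> 0 < x c -> tri C a b c) /\
  (forall a b c d, a <> b -> a <> c -> a <> d -> b <> c -> b <> d -> c <> d ->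
     ~ (0 < x a /\ 0 < x b /\ 0 < x c /\ 0 < x d)).

Definition node_pt (p : nat) : point := fun i => if Nat.eqb i p then 1 else 0.

Definition cont01 (C : complex2) (g : R -> point) : Prop :=
  forall t, 0 <= t <= 1 -> forall eps, 0 < eps -> exists delta, 0 < delta /\
    forall s, 0 <= s <= 1 -> Rabs (s - t) < delta ->
      forall i, (i < nnodes C)%nat -> Rabs (g s i - g t i) < eps.

(** * Finite multigraphs (loops and multiple edges allowed). *)
Record graph := Graph { gnv : nat; gne : nat; gsrc : nat -> nat; gtgt : nat -> nat }.

Definition wf_graph (G : graph) : Prop :=
  forall e, (e < gne G)%nat -> (gsrc G e < gnv G)%nat /\ (gtgt G e < gnv G)%nat.

(** Subdivide every edge exactly [k] times: edge [e] becomes a path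
    src e = w_0, w_1, ..., w_k, w_(k+1) = tgt e with new vertices
    w_j = gnv G + e*k + (j-1). *)
Definition subdiv_node (G : graph) (k e j : nat) : nat :=
  if Nat.eqb j 0 then gsrc G e
  else if Nat.eqb j (k + 1) then gtgt G e
  else (gnv G + e * k + (j - 1))%nat.

Definition subdivide (G : graph) (k : nat) : graph :=
  Graph (gnv G + gne G * k)%nat (gne G * (k + 1))%nat
    (fun e' => subdiv_node G k (e' / (k + 1)) (e' mod (k + 1)))
    (fun e' => subdiv_node G k (e' / (k + 1)) (e' mod (k + 1) + 1)).

(** An embedding of (the realization of) [G] into [C]: vertices go to points
    [fv v], edge [e] is traversed by the path [fe e] on [0,1]; the induced map
    on the realization of G is continuous and injective (G is compact, so this
    is a topological embedding). *)
Definition is_embedding (G : graph) (C : complex2)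
    (fv : nat -> point) (fe : nat -> R -> point) : Prop :=
  (forall v, (v < gnv G)%nat -> in_real C (fv v)) /\
  (forall e, (e < gne G)%nat ->
     cont01 C (fe e) /\ (forall t, 0 <= t <= 1 -> in_real C (fe e t)) /\
     eqpt (fe e 0) (fv (gsrc G e)) /\ eqpt (fe e 1) (fv (gtgt G e))) /\
  (forall v w, (v < gnv G)%nat -> (w < gnv G)%nat -> eqpt (fv v) (fv w) -> v = w) /\
  (forall e v t, (e < gne G)%nat -> (v < gnv G)%nat -> 0 < t < 1 ->
     ~ eqpt (fe e t) (fv v)) /\
  (forall e e' t t', (e < gne G)%nat -> (e' < gne G)%nat -> 0 < t < 1 -> 0 < t' < 1 ->
     eqpt (fe e t) (fe e' t') -> e = e' /\ t = t').

Definition embeds (G : graph) (C : complex2) : Prop :=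
  exists fv fe, is_embedding G C fv fe.

Definition in_image (G : graph) (fv : nat -> point) (fe : nat -> R -> point)
    (x : point) : Prop :=
  (exists v, (v < gnv G)%nat /\ eqpt (fv v) x) \/
  (exists e t, (e < gne G)%nat /\ 0 <= t <= 1 /\ eqpt (fe e t) x).

(* Main.v *)
Require Import Defs.
From Stdlib Require Import Reals List Arith.
From Stdlib Require Import Lia Lra Sorting ClassicalEpsilon.
Import ListNotations.
Open Scope R_scope.


Definition contI (n : nat) (a b : R) (g : R -> point) : Prop :=
  forall t, a <= t <= b -> forall eps, 0 < eps -> exists delta, 0 < delta /\
    forall s, a <= s <= b -> Rabs (s - t) < delta ->
      forall i, (i < n)%nat -> Rabs (g s i - g t i) < eps.

Lemma contI_ext n a b g h : contI n a b g ->
  (forall x, a <= x <= b -> eqpt (g x) (h x)) -> contI n a b h.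
Proof.
  intros Hg He t Ht eps Heps. destruct (Hg t Ht eps Heps) as [d [Hd H]].
  exists d; split; auto. intros s Hs Hst i Hi.
  rewrite <- (He s Hs i), <- (He t Ht i). auto.
Qed.

Lemma contI_affine n a b c d g (al lam : R) : contI n a b g -> 0 < lam ->
  (forall s, c <= s <= d -> a <= al + lam * s <= b) ->
  contI n c d (fun s => g (al + lam * s)).
Proof.
  intros Hg Hl Hm t Ht eps Heps.
  destruct (Hg _ (Hm t Ht) eps Heps) as [de [Hd H]].
  exists (de / lam). split. apply Rdiv_lt_0_compat; auto.
  intros s Hs Hst i Hi. apply H; auto.
  replace (al + lam * s - (al + lam * t)) with (lam * (s - t)) by ring.
  rewrite Rabs_mult, (Rabs_right lam) by lra.
  apply Rmult_lt_reg_r with (/ lam). apply Rinv_0_lt_compat; auto.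
  replace (lam * Rabs (s - t) * / lam) with (Rabs (s - t)) by (field; lra).
  exact Hst.
Qed.

Lemma contI_glue n a b c g : a <= b <= c -> contI n a b g -> contI n b c g ->
  contI n a c g.
Proof.
  intros Hb H1 H2 t Ht eps Heps.
  destruct (Rlt_le_dec t b) as [Htb|Htb].
  - destruct (H1 t ltac:(lra) eps Heps) as [d [Hd H]].
    exists (Rmin d (b - t)). split. apply Rmin_glb_lt; lra.
    intros s Hs Hst i Hi. apply H; auto.
    2: eapply Rlt_le_trans; [exact Hst| apply Rmin_l].
    assert (Rabs (s - t) < b - t) by (eapply Rlt_le_trans; [exact Hst| apply Rmin_r]).
    apply Rabs_def2 in H0. lra.
  - destruct (Rlt_le_dec b t) as [Hbt|Hbt].
    + destruct (H2 t ltac:(lra) eps Heps) as [d [Hd H]].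
      exists (Rmin d (t - b)). split. apply Rmin_glb_lt; lra.
      intros s Hs Hst i Hi. apply H; auto.
      2: eapply Rlt_le_trans; [exact Hst| apply Rmin_l].
      assert (Rabs (s - t) < t - b) by (eapply Rlt_le_trans; [exact Hst| apply Rmin_r]).
      apply Rabs_def2 in H0. lra.
    + assert (t = b) by lra. subst t.
      destruct (H1 b ltac:(lra) eps Heps) as [d1 [Hd1 K1]].
      destruct (H2 b ltac:(lra) eps Heps) as [d2 [Hd2 K2]].
      exists (Rmin d1 d2). split. apply Rmin_glb_lt; lra.
      intros s Hs Hst i Hi.
      destruct (Rle_dec s b).
      * apply K1; auto. lra. eapply Rlt_le_trans; [exact Hst| apply Rmin_l].
      * apply K2; auto. lra. eapply Rlt_le_trans; [exact Hst| apply Rmin_r].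
Qed.


Fixpoint cat (f : nat -> R -> point) (m : nat) (x : R) : point :=
  match m with
  | O => f O x
  | S m' => if Rle_dec x (INR m) then cat f m' x else f m (x - INR m)
  end.

Lemma cat_S f m x : cat f (S m) x =
  if Rle_dec x (INR (S m)) then cat f m x else f (S m) (x - INR (S m)).
Proof. reflexivity. Qed.

Lemma cat_char f m x : 0 <= x <= INR m + 1 ->
  exists j, (j <= m)%nat /\ cat f m x = f j (x - INR j) /\
    INR j <= x <= INR j + 1 /\ (j = O \/ INR j < x).
Proof.
  induction m; intros Hx.
  - exists O. simpl in *. split; [lia|]. split. f_equal; ring. split; [lra|auto].
  - rewrite cat_S. destruct (Rle_dec x (INR (S m))) as [H|H].
    + rewrite S_INR in H. destruct (IHm ltac:(lra)) as [j [Hj [E R1]]].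
      exists j. split; [lia|]. exact (conj E R1).
    + exists (S m). split; [lia|]. split; auto. rewrite S_INR in *. split; [lra|]. right; lra.
Qed.

Lemma cat_end f m : cat f m (INR m + 1) = f m 1.
Proof.
  destruct m.
  - simpl. f_equal; ring.
  - rewrite cat_S. destruct (Rle_dec (INR (S m) + 1) (INR (S m))). lra. f_equal; ring.
Qed.

Lemma cat_0 f m : cat f m 0 = f O 0.
Proof.
  induction m; auto. rewrite cat_S. destruct (Rle_dec 0 (INR (S m))); auto.
  exfalso; apply n; apply pos_INR.
Qed.

Lemma cat_cont n f m : (forall j, (j <= m)%nat -> contI n 0 1 (f j)) ->
  (forall j, (j < m)%nat -> eqpt (f j 1) (f (S j) 0)) ->
  contI n 0 (INR m + 1) (cat f m).
Proof.
  induction m; intros Hc Hj.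
  - simpl. replace (0 + 1) with 1 by ring. apply Hc; lia.
  - apply contI_glue with (INR (S m)).
    + split. apply pos_INR. lra.
    + rewrite S_INR. apply contI_ext with (cat f m).
      apply IHm; intros; [apply Hc|apply Hj]; lia.
      intros x Hx i. rewrite cat_S. destruct (Rle_dec x (INR (S m))). auto. rewrite S_INR in n0. lra.
    + apply contI_ext with (fun s => f (S m) (- INR (S m) + 1 * s)).
      apply contI_affine with 0 1. apply Hc; lia. lra. intros; lra.
      intros x Hx i. rewrite cat_S. destruct (Rle_dec x (INR (S m))).
      * assert (x = INR (S m)) by lra. subst x. rewrite S_INR, cat_end.
        rewrite <- S_INR. replace (- INR (S m) + 1 * INR (S m)) with 0 by ring.
        symmetry. apply Hj. lia.
      * replace (x - INR (S m)) with (- INR (S m) + 1 * x) by ring. reflexivity.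
Qed.


Lemma eqpt_sym x y : eqpt x y -> eqpt y x.
Proof. intros H i; auto. Qed.
Lemma eqpt_trans x y z : eqpt x y -> eqpt y z -> eqpt x z.
Proof. intros H1 H2 i; rewrite H1; auto. Qed.

Lemma divmod_eq (m e j : nat) : (j < m)%nat -> ((e * m + j) / m = e /\ (e * m + j) mod m = j)%nat.
Proof.
  intros Hj. split.
  - symmetry. apply Nat.div_unique with j; lia.
  - symmetry. apply Nat.mod_unique with e; lia.
Qed.

Lemma sub_src G k e j : (j <= k)%nat ->
  gsrc (subdivide G k) (e * (k + 1) + j) = subdiv_node G k e j.
Proof. intros Hj. simpl. destruct (divmod_eq (k+1) e j ltac:(lia)) as [A1 A2].
  rewrite A1, A2. reflexivity. Qed.

Lemma sub_tgt G k e j : (j <= k)%nat ->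
  gtgt (subdivide G k) (e * (k + 1) + j) = subdiv_node G k e (j + 1).
Proof. intros Hj. simpl. destruct (divmod_eq (k+1) e j ltac:(lia)) as [A1 A2].
  rewrite A1, A2. reflexivity. Qed.

Lemma sn0 G k e : subdiv_node G k e 0 = gsrc G e.
Proof. reflexivity. Qed.
Lemma snk G k e : subdiv_node G k e (k + 1) = gtgt G e.
Proof. unfold subdiv_node. rewrite Nat.eqb_refl. destruct (Nat.eqb (k+1) 0) eqn:E; auto.
  apply Nat.eqb_eq in E; lia. Qed.
Lemma snmid G k e j : (1 <= j <= k)%nat -> subdiv_node G k e j = (gnv G + e * k + (j - 1))%nat.
Proof. intros Hj. unfold subdiv_node.
  destruct (Nat.eqb j 0) eqn:E1. apply Nat.eqb_eq in E1; lia.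
  destruct (Nat.eqb j (k+1)) eqn:E2. apply Nat.eqb_eq in E2; lia. reflexivity. Qed.

Lemma cat_interior f m x : 0 < x < INR m + 1 ->
  exists j, (j <= m)%nat /\ cat f m x = f j (x - INR j) /\ INR j <= x /\
    ((0 < x - INR j < 1) \/ (x - INR j = 1 /\ (j < m)%nat)).
Proof.
  intros Hx. destruct (cat_char f m x ltac:(lra)) as [j [Hj [E [R1 R2]]]].
  exists j. split; auto. split; auto. split; [lra|].
  destruct (Req_dec (x - INR j) 1) as [H1|H1].
  - right. split; auto. apply INR_lt. lra.
  - left. destruct R2 as [R2|R2]. subst j. simpl in *. lra. lra.
Qed.


Lemma back G C k fv fe : wf_graph G -> is_embedding (subdivide G k) C fv fe -> embeds G C.
Proof.
  intros Hwf [Hv [He [Hinj [Hev Hee]]]].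
  set (P := fun e j => fe (e * (k + 1) + j)%nat).
  assert (Hedge : forall e j, (e < gne G)%nat -> (j <= k)%nat ->
            (e * (k + 1) + j < gne (subdivide G k))%nat).
  { intros e j H1 H2. simpl. nia. }
  assert (Hvert : forall e j, (e < gne G)%nat -> (j < k)%nat ->
            (gnv G + e * k + j < gnv (subdivide G k))%nat).
  { intros e j H1 H2. simpl. nia. }
  assert (HvG : forall v, (v < gnv G)%nat -> (v < gnv (subdivide G k))%nat).
  { intros v H. simpl. lia. }
  assert (Hmidv : forall e j, (e < gne G)%nat -> (j < k)%nat ->
            eqpt (P e j 1) (fv (gnv G + e * k + j)%nat)).
  { intros e j H1 H2. destruct (He _ (Hedge e j H1 ltac:(lia))) as [_ [_ [_ E]]].
    unfold P. rewrite sub_tgt in E by lia. rewrite snmid in E by lia.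
    replace (j + 1 - 1)%nat with j in E by lia. exact E. }
  assert (Hjunc : forall e j, (e < gne G)%nat -> (j < k)%nat ->
            eqpt (P e j 1) (P e (S j) 0)).
  { intros e j H1 H2. eapply eqpt_trans. apply Hmidv; auto.
    destruct (He _ (Hedge e (S j) H1 ltac:(lia))) as [_ [_ [E _]]].
    unfold P. rewrite sub_src in E by lia. rewrite snmid in E by lia.
    replace (S j - 1)%nat with j in E by lia. apply eqpt_sym; exact E. }
  exists fv, (fun e t => cat (P e) k (INR (S k) * t)).
  assert (HSk : INR (S k) = INR k + 1) by apply S_INR.
  assert (Hk0 : 0 < INR (S k)) by (apply lt_0_INR; lia).
  split; [|split; [|split; [|split]]].
  - intros v Hv'. apply Hv. auto.
  - intros e He'. split; [|split; [|split]].
    + unfold cont01. change (contI (nnodes C) 0 1 (fun t => cat (P e) k (INR (S k) * t))).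
      apply contI_ext with (fun t => cat (P e) k (0 + INR (S k) * t)).
      apply (contI_affine (nnodes C) 0 (INR k + 1) 0 1 (cat (P e) k) 0 (INR (S k))).
      apply cat_cont. intros j Hj. apply (He _ (Hedge e j He' Hj)).
      intros j Hj. apply Hjunc; auto.
      auto. intros s Hs. rewrite HSk. split; [|]. apply Rplus_le_le_0_compat. lra.
      apply Rmult_le_pos. pose proof (pos_INR k); lra. lra.
      pose proof (pos_INR k). nra.
      intros x _ i. rewrite Rplus_0_l. reflexivity.
    + intros t Ht. destruct (cat_char (P e) k (INR (S k) * t)) as [j [Hj [E [R1 _]]]].
      { rewrite HSk. pose proof (pos_INR k). nra. }
      rewrite E. apply (He _ (Hedge e j He' Hj)). lra.
    + rewrite Rmult_0_r, cat_0. destruct (He _ (Hedge e 0%nat He' ltac:(lia))) as [_ [_ [E _]]].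
      unfold P. rewrite sub_src in E by lia. exact E.
    + rewrite Rmult_1_r, HSk, cat_end. destruct (He _ (Hedge e k He' ltac:(lia))) as [_ [_ [_ E]]].
      unfold P. rewrite sub_tgt in E by lia. rewrite snk in E. exact E.
  - intros v w Hv1 Hw1 E. apply Hinj; auto.
  - intros e v t He' Hv' Ht E.
    destruct (cat_interior (P e) k (INR (S k) * t)) as [j [Hj [E2 [R1 [R2|[R2 R3]]]]]].
    { rewrite HSk in *. pose proof (pos_INR k). nra. }
    + rewrite E2 in E. eapply Hev. apply (Hedge e j He' Hj). apply HvG; exact Hv'. exact R2. exact E.
    + rewrite E2, R2 in E.
      assert (gnv G + e * k + j = v)%nat.
      { apply Hinj. apply Hvert; auto. apply HvG; auto.
        eapply eqpt_trans. apply eqpt_sym. apply Hmidv; auto. exact E. }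
      lia.
  - intros e e' t t' He1 He2 Ht Ht' E.
    destruct (cat_interior (P e) k (INR (S k) * t)) as [j [Hj [E1 [R1 R1']]]].
    { rewrite HSk in *. pose proof (pos_INR k). nra. }
    destruct (cat_interior (P e') k (INR (S k) * t')) as [j' [Hj' [E2 [R2 R2']]]].
    { rewrite HSk in *. pose proof (pos_INR k). nra. }
    rewrite E1, E2 in E.
    assert (Hfin : e = e' -> j = j' -> INR (S k) * t - INR j = INR (S k) * t' - INR j' -> e = e' /\ t = t').
    { intros -> -> H. split; auto. apply Rmult_eq_reg_l with (INR (S k)). lra. lra. }
    destruct R1' as [R1'|[R1' R1'']]; destruct R2' as [R2'|[R2' R2'']].
    + destruct (Hee _ _ _ _ (Hedge e j He1 Hj) (Hedge e' j' He2 Hj') R1' R2' E) as [Q1 Q2].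
      destruct (divmod_eq (k+1) e j ltac:(lia)) as [A1 A2].
      destruct (divmod_eq (k+1) e' j' ltac:(lia)) as [A3 A4].
      apply Hfin; auto. rewrite <- A1, <- A3, Q1; auto. rewrite <- A2, <- A4, Q1; auto.
    + exfalso. rewrite R2' in E. eapply Hev. apply (Hedge e j He1 Hj). apply (Hvert e' j' He2 R2'').
      exact R1'. eapply eqpt_trans. exact E. apply Hmidv; auto.
    + exfalso. rewrite R1' in E. eapply Hev. apply (Hedge e' j' He2 Hj'). apply (Hvert e j He1 R1'').
      exact R2'. eapply eqpt_trans. apply eqpt_sym. exact E. apply Hmidv; auto.
    + rewrite R1', R2' in E.
      assert (gnv G + e * k + j = gnv G + e' * k + j')%nat.
      { apply Hinj. apply Hvert; auto. apply Hvert; auto.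
        eapply eqpt_trans. apply eqpt_sym. apply Hmidv; auto.
        eapply eqpt_trans. exact E. apply Hmidv; auto. }
      destruct (divmod_eq k e j R1'') as [A1 A2].
      destruct (divmod_eq k e' j' R2'') as [A3 A4].
      assert (e * k + j = e' * k + j')%nat by lia.
      apply Hfin. rewrite <- A1, <- A3; f_equal; auto. rewrite <- A2, <- A4; f_equal; auto. lra.
Qed.


Lemma ss_nth (R0 : R -> R -> Prop) l d i j : StronglySorted R0 l ->
  (i < j)%nat -> (j < length l)%nat -> R0 (nth i l d) (nth j l d).
Proof.
  revert i j. induction l as [|a l IH]; intros i j Hs Hij Hj; simpl in *. lia.
  inversion Hs; subst. destruct i, j; try lia.
  - rewrite Forall_forall in H2. apply H2. apply nth_In. lia.
  - apply IH; auto; lia.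
Qed.

Definition in01 (L : list R) := forall x, In x L -> 0 < x < 1.

Lemma ss_ext L : StronglySorted Rlt L -> in01 L -> StronglySorted Rlt (0 :: L ++ [1]).
Proof.
  intros Hs Hi. constructor.
  - induction L as [|a L IH]; simpl. repeat constructor.
    inversion Hs; subst. constructor. apply IH; auto. intros x Hx; apply Hi; simpl; auto.
    apply Forall_app. split; auto. constructor; auto. assert (0 < a < 1) by (apply Hi; simpl; auto). lra.
  - apply Forall_app. split. apply Forall_forall. intros x Hx. apply Hi; auto.
    constructor; auto. lra.
Qed.

Definition sq (L : list R) (j : nat) : R := nth j (0 :: L ++ [1]) 0.

Lemma sq0 L : sq L 0 = 0.
Proof. reflexivity. Qed.

Lemma sqk L k : length L = k -> sq L (k + 1) = 1.
Proof. intros H. unfold sq. replace (k+1)%nat with (S k) by lia. simpl.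
  rewrite app_nth2 by lia. replace (k - length L)%nat with 0%nat by lia. reflexivity. Qed.

Lemma sq_mono L k i j : StronglySorted Rlt L -> in01 L -> length L = k ->
  (i < j)%nat -> (j <= k + 1)%nat -> sq L i < sq L j.
Proof. intros Hs Hi Hl Hij Hj. unfold sq. apply ss_nth. apply ss_ext; auto. auto.
  simpl. rewrite length_app. simpl. lia. Qed.

Lemma sq_mem L k x : length L = k -> In x L -> exists j, (1 <= j <= k)%nat /\ sq L j = x.
Proof. intros Hl Hx. destruct (In_nth L x 0 Hx) as [n [Hn E]].
  exists (S n). split. lia. unfold sq. simpl. rewrite app_nth1 by lia. auto. Qed.

Fixpoint insert (x : R) (L : list R) : list R :=
  match L with
  | [] => [x]
  | y :: L' => if Rlt_dec x y then x :: L else y :: insert x L'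
  end.

Lemma insert_In x L z : In z (insert x L) <-> z = x \/ In z L.
Proof.
  induction L as [|y L IH]; simpl; [split; intros [H|H]; auto; contradiction|].
  destruct (Rlt_dec x y); simpl; rewrite ?IH; split; intros; repeat (destruct H as [H|H]); subst; auto.
Qed.

Lemma insert_len x L : length (insert x L) = S (length L).
Proof. induction L; simpl; auto. destruct (Rlt_dec x a); simpl; auto. Qed.

Lemma insert_ss x L : StronglySorted Rlt L -> ~ In x L -> StronglySorted Rlt (insert x L).
Proof.
  induction L as [|y L IH]; intros Hs Hn; simpl. repeat constructor.
  inversion Hs; subst. destruct (Rlt_dec x y).
  - constructor; auto. constructor; auto. rewrite Forall_forall in *.
    intros z Hz. specialize (H2 z Hz). lra.
  - assert (y < x). { destruct (Rtotal_order x y) as [H|[H|H]]; [contradiction| subst; exfalso; apply Hn; simpl; auto | lra]. }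
    constructor. apply IH; auto. intro; apply Hn; simpl; auto.
    apply Forall_forall. intros z Hz. apply insert_In in Hz. destruct Hz as [->|Hz]; auto.
    rewrite Forall_forall in H2; auto.
Qed.

Definition ins (x : R) (L : list R) : list R :=
  if in_dec Req_EM_T x L then L else insert x L.

Definition build (T : list R) : list R := fold_right ins [] T.

Lemma build_prop T : StronglySorted Rlt (build T) /\
  (forall z, In z (build T) <-> In z T) /\ (length (build T) <= length T)%nat.
Proof.
  induction T as [|x T [H1 [H2 H3]]]; simpl. split. constructor. split; [tauto|]. auto.
  unfold ins. destruct (in_dec Req_EM_T x (build T)).
  - split; auto. split. intros z. rewrite H2. split; auto. intros [->|]; auto. apply H2; auto. lia.
  - split. apply insert_ss; auto. split. intros z. rewrite insert_In, H2. split; intros [H|H]; auto.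
    rewrite insert_len. lia.
Qed.

Fixpoint pad (n : nat) (L : list R) : list R :=
  match n with
  | O => L
  | S n' => pad n' (hd 1 L / 2 :: L)
  end.

Lemma pad_prop n L : StronglySorted Rlt L -> in01 L ->
  StronglySorted Rlt (pad n L) /\ in01 (pad n L) /\ length (pad n L) = (n + length L)%nat /\
  (forall z, In z L -> In z (pad n L)).
Proof.
  revert L. induction n; intros L Hs Hi; simpl. split; auto.
  assert (Hh : 0 < hd 1 L / 2 < 1 /\ Forall (Rlt (hd 1 L / 2)) L).
  { destruct L as [|a L]; simpl. split. lra. constructor.
    assert (0 < a < 1) by (apply Hi; simpl; auto). split. lra.
    inversion Hs as [|? ? Hs' HF]; subst. constructor. lra. rewrite Forall_forall in HF. apply Forall_forall. intros z Hz.
    specialize (HF z Hz). lra. }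
  destruct Hh as [Hh1 Hh2].
  assert (P1 : StronglySorted Rlt (hd 1 L / 2 :: L)) by (constructor; auto).
  assert (P2 : in01 (hd 1 L / 2 :: L)) by (intros x [<-|Hx]; auto).
  destruct (IHn (hd 1 L / 2 :: L) P1 P2) as [A1 [A2 [A3 A4]]].
  split; auto. split; auto. split. rewrite A3. simpl. lia.
  intros z Hz. apply A4. simpl; auto.
Qed.


Definition timeof (fe : nat -> R -> point) (e p : nat) : option R :=
  match excluded_middle_informative (exists t, 0 < t < 1 /\ eqpt (fe e t) (node_pt p)) with
  | left H => Some (proj1_sig (constructive_indefinite_description _ H))
  | right _ => None
  end.

Lemma timeof_some fe e p t : timeof fe e p = Some t -> 0 < t < 1 /\ eqpt (fe e t) (node_pt p).
Proof.
  unfold timeof. destruct excluded_middle_informative as [H|H]; [|discriminate].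
  destruct (constructive_indefinite_description _ H) as [x Hx]. simpl. intros E; inversion E; subst; auto.
Qed.

Lemma timeof_ex fe e p t : 0 < t < 1 -> eqpt (fe e t) (node_pt p) -> exists t', timeof fe e p = Some t'.
Proof.
  intros H1 H2. unfold timeof. destruct excluded_middle_informative as [H|H].
  eexists; reflexivity. exfalso; apply H; eauto.
Qed.

Definition times (fe : nat -> R -> point) (l : list nat) (e : nat) : list R :=
  flat_map (fun p => match timeof fe e p with Some t => [t] | None => [] end) l.

Lemma times_len fe l e : (length (times fe l e) <= length l)%nat.
Proof. induction l; simpl; auto. destruct (timeof fe e a); simpl; lia. Qed.

Lemma times_In fe l e t : In t (times fe l e) <-> exists p, In p l /\ timeof fe e p = Some t.
Proof.
  unfold times. rewrite in_flat_map. split.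
  - intros [p [Hp Ht]]. exists p. split; auto. destruct (timeof fe e p); simpl in Ht.
    destruct Ht as [->|[]]; auto. contradiction.
  - intros [p [Hp Ht]]. exists p. split; auto. rewrite Ht. simpl; auto.
Qed.

Definition Lof (fe : nat -> R -> point) (l : list nat) (k e : nat) : list R :=
  let B := build (times fe l e) in pad (k - length B) B.

Lemma Lof_prop fe l k e : length l = k ->
  StronglySorted Rlt (Lof fe l k e) /\ in01 (Lof fe l k e) /\ length (Lof fe l k e) = k /\
  (forall p t, In p l -> timeof fe e p = Some t -> In t (Lof fe l k e)).
Proof.
  intros Hl. unfold Lof. destruct (build_prop (times fe l e)) as [B1 [B2 B3]].
  assert (Hi : in01 (build (times fe l e))).
  { intros x Hx. apply B2 in Hx. apply times_In in Hx. destruct Hx as [p [_ Hp]].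
    apply timeof_some in Hp. tauto. }
  destruct (pad_prop (k - length (build (times fe l e))) _ B1 Hi) as [P1 [P2 [P3 P4]]].
  split; auto. split; auto. split. rewrite P3. pose proof (times_len fe l e). lia.
  intros p t Hp Ht. apply P4. apply B2. apply times_In. eauto.
Qed.

Lemma betw (s : nat -> R) k i j : (forall a b, (a < b)%nat -> (b <= k + 1)%nat -> s a < s b) ->
  (j <= k)%nat -> (i <= k + 1)%nat -> s j < s i -> s i < s (j + 1)%nat -> False.
Proof.
  intros Hm Hj Hi H1 H2. destruct (le_lt_dec i j).
  - destruct (Nat.eq_dec i j). subst; lra. pose proof (Hm i j ltac:(lia) ltac:(lia)). lra.
  - destruct (Nat.eq_dec i (j+1)). subst; lra. pose proof (Hm (j+1)%nat i ltac:(lia) ltac:(lia)). lra.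
Qed.

Lemma betw2 (s : nat -> R) k j1 j2 x : (forall a b, (a < b)%nat -> (b <= k + 1)%nat -> s a < s b) ->
  (j1 <= k)%nat -> (j2 <= k)%nat -> s j1 < x < s (j1 + 1)%nat -> s j2 < x < s (j2 + 1)%nat -> j1 = j2.
Proof.
  intros Hm H1 H2 A B. destruct (lt_eq_lt_dec j1 j2) as [[|]|]; auto.
  - assert (s (j1 + 1)%nat <= s j2). { destruct (Nat.eq_dec (j1+1) j2). subst; lra.
      left; apply Hm; lia. } lra.
  - assert (s (j2 + 1)%nat <= s j1). { destruct (Nat.eq_dec (j2+1) j1). subst; lra.
      left; apply Hm; lia. } lra.
Qed.

Lemma sub_wf G k : wf_graph G -> wf_graph (subdivide G k).
Proof.
  intros Hw e' He'. simpl in He'.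
  assert (Hk : (k + 1 <> 0)%nat) by lia.
  pose proof (Nat.div_mod e' (k+1) Hk) as Hd. pose proof (Nat.mod_upper_bound e' (k+1) Hk).
  set (e := (e' / (k+1))%nat) in *. set (j := (e' mod (k+1))%nat) in *.
  assert (He : (e < gne G)%nat) by nia.
  assert (Hn : forall i, (i <= k + 1)%nat -> (subdiv_node G k e i < gnv (subdivide G k))%nat).
  { intros i Hi. simpl. destruct (Nat.eq_dec i 0) as [Q|Q]. rewrite Q, sn0. destruct (Hw e He); lia.
    destruct (Nat.eq_dec i (k+1)) as [Q2|Q2]. rewrite Q2, snk. destruct (Hw e He); lia.
    rewrite snmid by lia. nia. }
  simpl. split; apply Hn; lia.
Qed.


Definition Sq fe l k e j := sq (Lof fe l k e) j.
Definition fvN G k (fv : nat -> point) fe l (w : nat) : point :=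
  if Nat.ltb w (gnv G) then fv w
  else fe ((w - gnv G) / k)%nat (Sq fe l k ((w - gnv G) / k)%nat ((w - gnv G) mod k + 1)%nat).
Definition feN k (fe : nat -> R -> point) l (e' : nat) (u : R) : point :=
  let e := (e' / (k + 1))%nat in let j := (e' mod (k + 1))%nat in
  fe e (Sq fe l k e j + (Sq fe l k e (j + 1) - Sq fe l k e j) * u).

Lemma feN_eq k fe l e j u : (j <= k)%nat ->
  feN k fe l (e * (k + 1) + j) u = fe e (Sq fe l k e j + (Sq fe l k e (j + 1) - Sq fe l k e j) * u).
Proof. intros Hj. unfold feN. destruct (divmod_eq (k+1) e j ltac:(lia)) as [A1 A2].
  rewrite A1, A2. reflexivity. Qed.

Lemma fvN_G G k fv fe l v : (v < gnv G)%nat -> fvN G k fv fe l v = fv v.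
Proof. intros H. unfold fvN. apply Nat.ltb_lt in H. rewrite H. reflexivity. Qed.

Lemma fvN_mid G k fv fe l e j : (j < k)%nat ->
  fvN G k fv fe l (gnv G + e * k + j) = fe e (Sq fe l k e (j + 1)).
Proof. intros H. unfold fvN. destruct (Nat.ltb_spec (gnv G + e * k + j) (gnv G)). lia.
  replace (gnv G + e * k + j - gnv G)%nat with (e * k + j)%nat by lia.
  destruct (divmod_eq k e j H) as [A1 A2]. rewrite A1, A2. reflexivity. Qed.

Lemma dec_edge G k e' : (e' < gne G * (k + 1))%nat ->
  exists e j, (e < gne G)%nat /\ (j <= k)%nat /\ e' = (e * (k + 1) + j)%nat.
Proof.
  intros H. assert (Hk : (k + 1 <> 0)%nat) by lia.
  pose proof (Nat.div_mod e' (k+1) Hk). pose proof (Nat.mod_upper_bound e' (k+1) Hk).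
  exists (e' / (k+1))%nat, (e' mod (k+1))%nat. split; [nia|]. split; [lia|]. lia.
Qed.

Lemma dec_vert G k w : (w < gnv G + gne G * k)%nat ->
  (w < gnv G)%nat \/ exists e j, (e < gne G)%nat /\ (j < k)%nat /\ w = (gnv G + e * k + j)%nat.
Proof.
  intros H. destruct (Nat.lt_ge_cases w (gnv G)); [left; auto|right].
  assert (Hk : (k <> 0)%nat) by (intro; subst; lia).
  pose proof (Nat.div_mod (w - gnv G) k Hk). pose proof (Nat.mod_upper_bound (w - gnv G) k Hk).
  exists ((w - gnv G) / k)%nat, ((w - gnv G) mod k)%nat. split; [nia|]. split; [lia|]. lia.
Qed.


Lemma forward G C k l fv fe :
  wf_graph G -> (forall p, singular C p -> In p l) -> length l = k -> is_embedding G C fv fe ->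
  exists fv' fe', is_embedding (subdivide G k) C fv' fe' /\
    forall p, singular C p -> in_image (subdivide G k) fv' fe' (node_pt p) ->
      exists v, (v < gnv (subdivide G k))%nat /\ eqpt (fv' v) (node_pt p).
Proof.
  intros Hwf Hl Hlen [Hv [He [Hinj [Hev Hee]]]].
  assert (HM : forall e a b, (a < b)%nat -> (b <= k + 1)%nat -> Sq fe l k e a < Sq fe l k e b).
  { intros e a b H1 H2. destruct (Lof_prop fe l k e Hlen) as [L1 [L2 [L3 _]]].
    unfold Sq. eapply sq_mono; eauto. }
  assert (HS0 : forall e, Sq fe l k e 0 = 0) by (intros; reflexivity).
  assert (HS1 : forall e, Sq fe l k e (k + 1) = 1).
  { intros e. destruct (Lof_prop fe l k e Hlen) as [L1 [L2 [L3 _]]]. unfold Sq. apply sqk; auto. }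
  assert (Hin : forall e j, (1 <= j <= k)%nat -> 0 < Sq fe l k e j < 1).
  { intros e j Hj. rewrite <- (HS0 e), <- (HS1 e). split; apply HM; lia. }
  assert (Hrng : forall e j, (j <= k + 1)%nat -> 0 <= Sq fe l k e j <= 1).
  { intros e j Hj. destruct (Nat.eq_dec j 0) as [->|]. rewrite HS0; lra.
    destruct (Nat.eq_dec j (k+1)) as [->|]. rewrite HS1; lra.
    pose proof (Hin e j ltac:(lia)). lra. }
  assert (Htau : forall e j u, (j <= k)%nat -> 0 <= u <= 1 ->
     Sq fe l k e j <= Sq fe l k e j + (Sq fe l k e (j + 1) - Sq fe l k e j) * u <= Sq fe l k e (j + 1)).
  { intros e j u Hj Hu. pose proof (HM e j (j+1)%nat ltac:(lia) ltac:(lia)). nra. }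
  assert (Htau2 : forall e j u, (j <= k)%nat -> 0 < u < 1 ->
     Sq fe l k e j < Sq fe l k e j + (Sq fe l k e (j + 1) - Sq fe l k e j) * u < Sq fe l k e (j + 1)).
  { intros e j u Hj Hu. pose proof (HM e j (j+1)%nat ltac:(lia) ltac:(lia)). nra. }
  assert (Htau3 : forall e j u, (j <= k)%nat -> 0 <= u <= 1 ->
     0 <= Sq fe l k e j + (Sq fe l k e (j + 1) - Sq fe l k e j) * u <= 1).
  { intros e j u Hj Hu. pose proof (Htau e j u Hj Hu). pose proof (Hrng e j ltac:(lia)).
    pose proof (Hrng e (j+1)%nat ltac:(lia)). lra. }
  assert (Htau4 : forall e j u, (j <= k)%nat -> 0 < u < 1 ->
     0 < Sq fe l k e j + (Sq fe l k e (j + 1) - Sq fe l k e j) * u < 1).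
  { intros e j u Hj Hu. pose proof (Htau2 e j u Hj Hu). pose proof (Hrng e j ltac:(lia)).
    pose proof (Hrng e (j+1)%nat ltac:(lia)). lra. }
  assert (Hnode : forall e j, (e < gne G)%nat -> (j <= k + 1)%nat ->
     eqpt (fe e (Sq fe l k e j)) (fvN G k fv fe l (subdiv_node G k e j))).
  { intros e j He' Hj. destruct (He e He') as [_ [_ [E0 E1]]].
    destruct (Nat.eq_dec j 0) as [->|Q1]. rewrite sn0, HS0, fvN_G. exact E0. apply Hwf; auto.
    destruct (Nat.eq_dec j (k+1)) as [->|Q2]. rewrite snk, HS1, fvN_G. exact E1. apply Hwf; auto.
    rewrite snmid by lia. rewrite fvN_mid by lia. replace (j - 1 + 1)%nat with j by lia.
    intro; reflexivity. }
  assert (Hvc : forall w, (w < gnv (subdivide G k))%nat ->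
     ((w < gnv G)%nat /\ fvN G k fv fe l w = fv w) \/
     exists e j, (e < gne G)%nat /\ (1 <= j <= k)%nat /\ fvN G k fv fe l w = fe e (Sq fe l k e j) /\
       w = (gnv G + e * k + (j - 1))%nat).
  { intros w Hw. simpl in Hw. destruct (dec_vert G k w Hw) as [H|[e [j [H1 [H2 H3]]]]].
    left. split; auto. apply fvN_G; auto.
    right. exists e, (j+1)%nat. split; auto. split. lia. split. subst. apply fvN_mid; auto.
    rewrite H3. f_equal. lia. }
  exists (fvN G k fv fe l), (feN k fe l). split; [split; [|split; [|split; [|split]]]|].
  - intros w Hw. destruct (Hvc w Hw) as [[H1 ->]|[e [j [H1 [H2 [-> _]]]]]]. apply Hv; auto.
    apply (He e H1). pose proof (Hin e j H2). lra.
  - intros e' He'. simpl in He'. destruct (dec_edge G k e' He') as [e [j [H1 [H2 ->]]]].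
    destruct (He e H1) as [Hc [Hr _]].
    split; [|split; [|split]].
    + unfold cont01. change (contI (nnodes C) 0 1 (feN k fe l (e * (k + 1) + j))).
      apply contI_ext with (fun u => fe e (Sq fe l k e j + (Sq fe l k e (j + 1) - Sq fe l k e j) * u)).
      apply contI_affine with 0 1. exact Hc. pose proof (HM e j (j+1)%nat ltac:(lia) ltac:(lia)). lra.
      intros; apply Htau3; auto.
      intros x _ i. rewrite feN_eq by lia. reflexivity.
    + intros t Ht. rewrite feN_eq by lia. apply Hr. apply Htau3; auto.
    + rewrite feN_eq by lia. rewrite Rmult_0_r, Rplus_0_r, sub_src by lia. apply Hnode; auto. lia.
    + rewrite feN_eq by lia. rewrite sub_tgt by lia.
      replace (Sq fe l k e j + (Sq fe l k e (j + 1) - Sq fe l k e j) * 1) with (Sq fe l k e (j+1)) by ring.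
      apply Hnode; auto. lia.
  - intros v w Hv1 Hw1 E.
    destruct (Hvc v Hv1) as [[A1 A2]|[e [j [A1 [A2 [A3 A4]]]]]];
    destruct (Hvc w Hw1) as [[B1 B2]|[e2 [j2 [B1 [B2 [B3 B4]]]]]]; rewrite ?A2, ?A3, ?B2, ?B3 in E.
    + apply Hinj; auto.
    + exfalso. apply (Hev e2 v (Sq fe l k e2 j2) B1 A1 (Hin e2 j2 B2)). apply eqpt_sym; exact E.
    + exfalso. apply (Hev e w (Sq fe l k e j) A1 B1 (Hin e j A2)). exact E.
    + destruct (Hee _ _ _ _ A1 B1 (Hin e j A2) (Hin e2 j2 B2) E) as [-> Q].
      assert (j = j2).
      { destruct (lt_eq_lt_dec j j2) as [[|]|]; auto.
        pose proof (HM e2 j j2 ltac:(lia) ltac:(lia)); lra.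
        pose proof (HM e2 j2 j ltac:(lia) ltac:(lia)); lra. }
      subst; auto.
  - intros e' w t He' Hw Ht E. simpl in He'. destruct (dec_edge G k e' He') as [e [j [H1 [H2 ->]]]].
    rewrite feN_eq in E by lia.
    destruct (Hvc w Hw) as [[A1 A2]|[e2 [j2 [A1 [A2 [A3 A4]]]]]]; rewrite ?A2, ?A3 in E.
    + exact (Hev _ _ _ H1 A1 (Htau4 e j t H2 Ht) E).
    + destruct (Hee _ _ _ _ H1 A1 (Htau4 e j t H2 Ht) (Hin e2 j2 A2) E) as [<- Q].
      apply (betw (Sq fe l k e) k j2 j). intros; apply HM; auto. auto. lia.
      rewrite <- Q; apply Htau2; auto. rewrite <- Q; apply Htau2; auto.
  - intros e1' e2' t1 t2 He1 He2 Ht1 Ht2 E. simpl in He1, He2.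
    destruct (dec_edge G k e1' He1) as [e1 [j1 [H1 [H2 ->]]]].
    destruct (dec_edge G k e2' He2) as [e2 [j2 [H3 [H4 ->]]]].
    rewrite !feN_eq in E by lia.
    destruct (Hee _ _ _ _ H1 H3 (Htau4 e1 j1 t1 H2 Ht1) (Htau4 e2 j2 t2 H4 Ht2) E) as [<- Q].
    assert (j1 = j2).
    { apply (betw2 (Sq fe l k e1) k j1 j2 (Sq fe l k e1 j1 + (Sq fe l k e1 (j1 + 1) - Sq fe l k e1 j1) * t1)).
      intros; apply HM; auto. auto. auto. apply Htau2; auto. rewrite Q. apply Htau2; auto. }
    subst j2. split; auto.
    pose proof (HM e1 j1 (j1+1)%nat ltac:(lia) ltac:(lia)).
    apply Rmult_eq_reg_l with (Sq fe l k e1 (j1 + 1) - Sq fe l k e1 j1). lra. lra.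
  - intros p Hp [[v [Hv1 Ev]]|[e' [u [He' [Hu Eu]]]]].
    + exists v; auto.
    + pose proof (sub_wf G k Hwf e' He') as [Ws Wt].
      simpl in He'. destruct (dec_edge G k e' He') as [e [j [H1 [H2 ->]]]].
      rewrite feN_eq in Eu by lia.
      destruct (Req_dec u 0) as [U0|U0].
      { exists (gsrc (subdivide G k) (e * (k + 1) + j)). split; auto.
        rewrite sub_src by lia. eapply eqpt_trans. apply eqpt_sym. apply Hnode; auto. lia.
        subst u. rewrite Rmult_0_r, Rplus_0_r in Eu. exact Eu. }
      destruct (Req_dec u 1) as [U1|U1].
      { exists (gtgt (subdivide G k) (e * (k + 1) + j)). split; auto.
        rewrite sub_tgt by lia. eapply eqpt_trans. apply eqpt_sym. apply Hnode; auto. lia.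
        subst u. replace (Sq fe l k e j + (Sq fe l k e (j + 1) - Sq fe l k e j) * 1) with (Sq fe l k e (j+1)) in Eu by ring.
        exact Eu. }
      exfalso. assert (Hu' : 0 < u < 1) by lra.
      destruct (timeof_ex fe e p _ (Htau4 e j u H2 Hu') Eu) as [t' Ht'].
      destruct (timeof_some _ _ _ _ Ht') as [T1 T2].
      destruct (Hee _ _ _ _ H1 H1 (Htau4 e j u H2 Hu') T1 (eqpt_trans _ _ _ Eu (eqpt_sym _ _ T2))) as [_ Q].
      destruct (Lof_prop fe l k e Hlen) as [_ [_ [L3 L4]]].
      specialize (L4 p t' (Hl p Hp) Ht').
      destruct (sq_mem _ k t' L3 L4) as [i [Hi Ei]].
      apply (betw (Sq fe l k e) k i j). intros; apply HM; auto. auto. lia.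
      unfold Sq at 2. rewrite Ei, <- Q. apply Htau2; auto.
      unfold Sq at 1. rewrite Ei, <- Q. apply Htau2; auto.
Qed.

Close Scope R_scope.


Theorem mainTheorem5 (C : complex2) (k : nat) (G : graph) :
  is_2complex C -> ~ has_3book C -> num_singular C k -> wf_graph G ->
  (embeds G C <->
   exists fv fe, is_embedding (subdivide G k) C fv fe /\
     forall p, singular C p -> in_image (subdivide G k) fv fe (node_pt p) ->
       exists v, (v < gnv (subdivide G k))%nat /\ eqpt (fv v) (node_pt p)).
Proof.
  intros HC Hb [l [Hnd [Hl Hlen]]] Hwf. split.
  - intros [fv [fe Hemb]]. apply (forward G C k l fv fe Hwf); auto.
    intros p Hp; apply Hl; auto.
  - intros [fv [fe [Hemb _]]]. eapply back; eauto.
Qed.
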